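(* Let $v,\rho\in\mathbb{N}^+$, let $\boldsymbol\alpha=(\alpha,\dots,\alpha)\in\mathbb{N}^{v+1}$ with $\alpha\ge1$ (non-informative prior), and let $R$ be a symmetric, bounded, strictly proper scoring rule on outcomes $\{0,\dots,v\}$. Fix a reviewer $i$ with observed signals $\mathbf{t}_i=(t_{i,1},\dots,t_{i,\rho})\in\{0,\dots,v\}^\rho$ and true posterior predictive distribution $\boldsymbol\theta=\mathbf{p}^{(\rho)}(\mathbf{t}_i)$, and suppose $\mathbf{t}_i$ has a unique mode $z$, i.e. $\#\{m:t_{i,m}=z\}>\#\{m:t_{i,m}=y\}$ for all $y\ne z$. The reviewer reports a single value $r\in\{0,\dots,v\}$ and is scored by $\sum_{j\ne i}(\gamma R(\mathbf{p}(r),r_j)+\lambda)$ with $\gamma>0,\lambda\in\mathbb{R}$; his expected score is $$S_i(r)=\sum_{j\neq i}\sum_{e=0}^v\theta_e\big(\gamma R(\mathbf{p}(r),e)+\lambda\big).$$ Then $S_i(r)$ is strictly maximized over $r\in\{0,\dots,v\}$ if and only if $r=z$.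
   Context: For $x\in\{0,\dots,v\}$, $\mathbf{p}(x)$ is the probability vector with $p_k(x)=\frac{\alpha_k+1}{1+\sum_m\alpha_m}$ if $k=x$ and $\frac{\alpha_k}{1+\sum_m\alpha_m}$ otherwise. For $\mathbf{x}\in\{0,\dots,v\}^\rho$, $\mathbf{p}^{(\rho)}(\mathbf{x})$ has entries $p^{(\rho)}_k(\mathbf{x})=\frac{\alpha_k+\#\{m:x_m=k\}}{\rho+\sum_l\alpha_l}$. A scoring rule $R(\mathbf{z},e)$ is strictly proper if $\sum_eq_eR(\mathbf{z},e)$ is uniquely maximized at $\mathbf{z}=\mathbf{q}$ for every probability vector $\mathbf{q}$; symmetric if its value is invariant under simultaneously permuting the entries of $\mathbf{z}$ and relabeling the outcome $e$ accordingly; bounded if it is always finite. *)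

(* Defs.v *)
From HB Require Import structures.
From mathcomp Require Import all_boot all_order all_algebra all_fingroup.
Set Implicit Arguments. Unset Strict Implicit. Unset Printing Implicit Defensive.
Import Order.TTheory GRing.Theory Num.Theory.
Local Open Scope ring_scope.

Definition prob_vec (F : realFieldType) (v : nat) (q : {ffun 'I_v.+1 -> F}) : Prop :=
  (forall k, 0 <= q k) /\ \sum_k q k = 1.

Definition scoring_rule (F : realFieldType) (v : nat) :=
  {ffun 'I_v.+1 -> F} -> 'I_v.+1 -> F.

Definition exp_score (F : realFieldType) (v : nat) (Rs : scoring_rule F v)
  (z q : {ffun 'I_v.+1 -> F}) : F := \sum_e q e * Rs z e.

Definition strictly_proper (F : realFieldType) (v : nat) (Rs : scoring_rule F v) : Prop :=
  forall q z, prob_vec q -> prob_vec z -> z != q ->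
    exp_score Rs z q < exp_score Rs q q.

Definition symmetric_rule (F : realFieldType) (v : nat) (Rs : scoring_rule F v) : Prop :=
  forall (s : 'S_v.+1) (z : {ffun 'I_v.+1 -> F}) (e : 'I_v.+1),
    Rs [ffun k => z (s k)] e = Rs z (s e).

Definition p_one (F : realFieldType) (v : nat) (alpha : 'I_v.+1 -> nat) (x : 'I_v.+1)
  : {ffun 'I_v.+1 -> F} :=
  [ffun k => ((alpha k + (k == x))%N)%:R / (1 + (\sum_m alpha m)%N%:R)].

Definition p_rho (F : realFieldType) (v rho : nat) (alpha : 'I_v.+1 -> nat)
  (x : 'I_rho -> 'I_v.+1) : {ffun 'I_v.+1 -> F} :=
  [ffun k => ((alpha k + #|[pred m | x m == k]|)%N)%:R
              / (rho%:R + (\sum_l alpha l)%N%:R)].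

Definition expected_score (F : realFieldType) (v n : nat) (i : 'I_n)
  (alpha : 'I_v.+1 -> nat) (Rs : scoring_rule F v) (gamma lambda : F)
  (theta : {ffun 'I_v.+1 -> F}) (r : 'I_v.+1) : F :=
  \sum_(j < n | j != i) \sum_e theta e * (gamma * Rs (p_one F alpha r) e + lambda).

(* Main.v *)
Require Import Defs.
From HB Require Import structures.
From mathcomp Require Import all_boot all_order all_algebra all_fingroup.
From mathcomp Require Import ring.
Import Order.TTheory GRing.Theory Num.Theory.
Local Open Scope ring_scope.

Section Aux.
Variable F : realFieldType.
Variable v : nat.

Lemma swap_diff (q f : 'I_v.+1 -> F) (y z : 'I_v.+1) : y != z ->
  \sum_e q e * f e - \sum_e q (tperm y z e) * f e = (q z - q y) * (f z - f y).
Proof.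
move=> yz; rewrite -sumrB (bigD1 z) //= (bigD1 y) //= big1; last first.
  move=> e /andP[ez ey]; rewrite tpermD 1?eq_sym //; by rewrite subrr.
rewrite tpermR tpermL addr0; ring.
Qed.

Lemma reind (q : 'I_v.+1 -> F) (f : 'I_v.+1 -> F) (s : 'S_v.+1) :
  involutive s -> \sum_e q e * f (s e) = \sum_e q (s e) * f e.
Proof.
move=> sK; rewrite (reindex_inj (@perm_inj _ s)) /=.
by apply: eq_bigr => e _; rewrite sK.
Qed.

Lemma p_one_swap (al : nat) (y z : 'I_v.+1) :
  p_one F (fun _ => al) y = [ffun k => p_one F (fun _ => al) z (tperm y z k)].
Proof.
apply/ffunP => k; rewrite !ffunE.
congr (((al + _)%N)%:R / _).
case: (tpermP y z k) => [->|->|/eqP ky /eqP kz]; rewrite ?eqxx.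
- by [].
- by case: (y =P z) => [->|]; rewrite ?eqxx //; move=> /eqP/negbTE; rewrite eq_sym => ->.
- by rewrite (negbTE ky) (negbTE kz).
Qed.

Lemma p_one_prob (al : nat) (x : 'I_v.+1) : prob_vec (p_one F (fun _ => al) x).
Proof.
have D0 : (0 : F) < 1 + (\sum_(m < v.+1) al)%N%:R by rewrite ltr_pwDl ?ler0n.
split.
  by move=> k; rewrite ffunE divr_ge0 ?ler0n // ltW.
rewrite (eq_bigr (fun k => ((al + (k == x))%N)%:R * (1 + (\sum_(m < v.+1) al)%N%:R)^-1));
  last by move=> k _; rewrite ffunE.
have h1 : (\sum_(i < v.+1) (i == x))%N = 1%N.
  rewrite (bigD1 x) //= big1 => [|k /negbTE -> //]; by rewrite eqxx.
rewrite -mulr_suml -natr_sum big_split /= h1.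

rewrite natrD addrC divff //; by rewrite gt_eqF.
Qed.

End Aux.

Theorem proposition4 (F : realFieldType) (v rho n : nat) (alpha : nat)
  (Rs : scoring_rule F v) (gamma lambda : F) (i : 'I_n)
  (t : 'I_rho -> 'I_v.+1) (z : 'I_v.+1) :
  (0 < v)%N -> (0 < rho)%N -> (1 < n)%N -> (1 <= alpha)%N ->
  symmetric_rule Rs -> strictly_proper Rs ->
  0 < gamma ->
  (forall y : 'I_v.+1, y != z ->
     (#|[pred m | t m == y]| < #|[pred m | t m == z]|)%N) ->
  forall r : 'I_v.+1,
    (forall y : 'I_v.+1, y != r ->
       expected_score i (fun _ => alpha) Rs gamma lambda
         (p_rho F (fun _ => alpha) t) y
       < expected_score i (fun _ => alpha) Rs gamma lambda
         (p_rho F (fun _ => alpha) t) r)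
    <-> r = z.
Proof.
move=> v0 rho0 n1 al1 Hsym Hsp g0 Hmode.
set th := p_rho F (fun _ => alpha) t.
set P := p_one F (fun _ => alpha) z.
(* key: for y != z, E(p(y), q) = sum q (s e) * R P e *)
have Ey : forall (q : {ffun 'I_v.+1 -> F}) y, y != z ->
    exp_score Rs (p_one F (fun _ => alpha) y) q - exp_score Rs P q
    = - ((q z - q y) * (Rs P z - Rs P y)).
  move=> q y yz; rewrite /exp_score (@p_one_swap F v alpha y z).
  under eq_bigr => e _ do rewrite (Hsym (tperm y z) P e).
  rewrite reind; last exact: tpermK.
  by rewrite -swap_diff // opprB.
have key : forall y, y != z ->
    exp_score Rs (p_one F (fun _ => alpha) y) th < exp_score Rs P th.
  move=> y yz; rewrite -subr_lt0 Ey // oppr_lt0.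
  have D0 : (0 : F) < 1 + (\sum_(m < v.+1) alpha)%N%:R by rewrite ltr_pwDl ?ler0n.
  have HR : 0 < Rs P z - Rs P y.
    have hne : p_one F (fun _ => alpha) y != P.
      apply/eqP => hh; have := congr1 (fun f : {ffun _ -> F} => f z) hh; rewrite /P !ffunE eqxx eq_sym (negbTE yz).
      move/(mulIf (invr_neq0 (lt0r_neq0 D0)))/eqP.
      by rewrite eqr_nat /= addn0 addn1 (ltn_eqF (ltnSn _)).
    have := Hsp P _ (@p_one_prob F v alpha z) (@p_one_prob F v alpha y) hne.
    rewrite -subr_gt0 -opprB Ey // opprK.
    rewrite /P !ffunE eqxx (negbTE yz) /= addn0 -mulrBl pmulr_rgt0 //.
    have -> : ((alpha + 1)%N%:R - alpha%:R : F) = 1 by rewrite natrD; ring.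
    by rewrite mul1r invr_gt0.
  rewrite pmulr_lgt0 // /th !ffunE -mulrBl pmulr_rgt0.
    by rewrite invr_gt0 ltr_wpDr ?ler0n // ltr0n.
  by rewrite subr_gt0 ltr_nat ltn_add2l Hmode.
have S : forall y, y != z ->
    expected_score i (fun _ => alpha) Rs gamma lambda th y
    < expected_score i (fun _ => alpha) Rs gamma lambda th z.
  move=> y yz; rewrite /expected_score; apply: ltr_sum.
    have [j ji] : exists j : 'I_n, j != i.
      case: (i =P Ordinal n1) => [->|/eqP h].
        by exists (Ordinal (ltn_trans (ltnSn 0) n1)).
      by exists (Ordinal n1); rewrite eq_sym.
    by apply/hasP; exists j; rewrite ?mem_index_enum.
  move=> j _; rewrite -subr_gt0 -sumrB.
  rewrite (eq_bigr (fun e => gamma * (th e * Rs P e - th e * Rs (p_one F (fun _ => alpha) y) e))); last first.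
    by move=> e _; rewrite /P; ring.
  rewrite -mulr_sumr sumrB pmulr_rgt0 // subr_gt0; exact: key.
move=> r; split.
  move=> H; apply/eqP; apply/negP => /negP rz.
  have := S r rz; have := H z; rewrite eq_sym => /(_ rz) h1 h2.
  by have := lt_trans h1 h2; rewrite ltxx.
by move=> ->; exact: S.
Qed.
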